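(* Let $m\ge 1$ and $u,v\in\{0,1\}^m$. Then there exists a tilde-transformation from $u$ to $v$ of length $\mathrm{dist}_\sim(u,v)$ in which, for every $i=1,\dots,m$, the symbol in position $i$ is modified by at most one of the operations. In other words, a minimal tilde-transformation from $u$ to $v$ always exists.
   Context: Words are over the binary alphabet $\{0,1\}$; for $w=a_1\cdots a_m$ write $w[i]=a_i$. The replacement $R_i$ replaces $a_i$ by the other binary symbol; it modifies position $i$. The swap $S_i$ is defined only when $a_i\neq a_{i+1}$ and exchanges $a_i$ and $a_{i+1}$; it modifies positions $i$ and $i+1$. For equal-length words $u,v$, the tilde-distance $\mathrm{dist}_\sim(u,v)$ is the minimum number of replacements and swaps needed to transform $u$ into $v$. A tilde-transformation of length $h$ from $u$ to $v$ is a sequence of words $(w_0,\dots,w_h)$ with $w_0=u$, $w_h=v$, and each $w_{k+1}$ obtained from $w_k$ by a single replacement or swap. It is minimal if $h=\mathrm{dist}_\sim(u,v)$ and each position is modified by at most one of its operations. *)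

(* Defs.v *)
From mathcomp Require Import all_boot.
Set Implicit Arguments. Unset Strict Implicit. Unset Printing Implicit Defensive.

(* Binary words are [seq bool]; positions are 0-indexed (paper's position i
   is index i-1 here). *)
Definition word := seq bool.

Inductive op := Rep of nat | Swp of nat.

Definition apply_op (w : word) (o : op) : option word :=
  match o with
  | Rep i => if i < size w then Some (set_nth false w i (~~ nth false w i))
             else None
  | Swp i => if (i.+1 < size w) && (nth false w i != nth false w i.+1)
             then Some (set_nth false (set_nth false w i (nth false w i.+1))
                                i.+1 (nth false w i))
             else None
  end.

Definition modified (o : op) : seq nat :=
  match o with Rep i => [:: i] | Swp i => [:: i; i.+1] end.

Fixpoint run_words (w : word) (ops : seq op) : option (seq word) :=
  match ops with
  | [::] => Some [:: w]
  | o :: ops' => match apply_op w o with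
                 | Some w' => match run_words w' ops' with
                              | Some ws => Some (w :: ws)
                              | None => None
                              end
                 | None => None
                 end
  end.

Definition tilde_transformation (u v : word) (ops : seq op) : Prop :=
  exists ws, run_words u ops = Some ws /\ last u ws = v.

Definition is_dist_tilde (u v : word) (d : nat) : Prop :=
  (exists ops, tilde_transformation u v ops /\ size ops = d) /\
  (forall ops, tilde_transformation u v ops -> d <= size ops).

Definition minimal_tilde_transformation (u v : word) (ops : seq op) : Prop :=
  tilde_transformation u v ops /\ is_dist_tilde u v (size ops) /\
  uniq (flatten (map modified ops)).

(* Main.v *)
From Stdlib Require Import Classical.
Require Import Defs.
From mathcomp Require Import all_boot zify.


Set Implicit Arguments. Unset Strict Implicit. Unset Printing Implicit Defensive.

Inductive Plan : word -> word -> nat -> Prop :=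
| PNil : Plan [::] [::] 0
| PEq a u v c : Plan u v c -> Plan (a::u) (a::v) c
| PRep a b u v c : a != b -> Plan u v c -> Plan (a::u) (b::v) c.+1
| PSwp a b u v c : a != b -> Plan u v c -> Plan (a::b::u) (b::a::v) c.+1.

Inductive Step : word -> word -> Prop :=
| SRep a b t : a != b -> Step (a::t) (b::t)
| SSwp a b t : a != b -> Step (a::b::t) (b::a::t)
| SCons a t t' : Step t t' -> Step (a::t) (a::t').

Definition shift o := match o with Rep i => Rep i.+1 | Swp i => Swp i.+1 end.

Lemma apply_shift a w o :
  apply_op (a::w) (shift o) = omap (cons a) (apply_op w o).
Proof. by case: o => i /=; rewrite ltnS; case: ifP. Qed.

Fixpoint exec (w : word) (ops : seq op) : option word :=
  match ops with
  | [::] => Some w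
  | o :: ops' => if apply_op w o is Some w' then exec w' ops' else None
  end.

Lemma exec_shift a w ops :
  exec (a::w) (map shift ops) = omap (cons a) (exec w ops).
Proof.
elim: ops w => [|o ops IH] w //=.
rewrite apply_shift; case: (apply_op w o) => //= w'.
Qed.

Lemma run_exec w ops ws : run_words w ops = Some ws ->
  exists ws', ws = w :: ws' /\ exec w ops = Some (last w ws').
Proof.
elim: ops w ws => [|o ops IH] w ws /=.
  by case=> <-; exists [::].
case: (apply_op w o) => // w'.
case E: (run_words w' ops) => [ws0|] // [<-].
have [ws0' [-> ->]] := IH _ _ E.
by exists (w' :: ws0').
Qed.

Lemma exec_run w ops v : exec w ops = Some v ->
  exists ws', run_words w ops = Some (w :: ws') /\ last w ws' = v.
Proof.
elim: ops w => [|o ops IH] w /=.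
  by case=> <-; exists [::].
case: (apply_op w o) => // w' E.
have [ws0' [-> <-]] := IH _ E.
by exists (w' :: ws0').
Qed.

Lemma tt_exec u v ops : tilde_transformation u v ops <-> exec u ops = Some v.
Proof.
split.
  case=> ws [E <-]. have [ws' [-> ->]] := run_exec E. by [].
move=> /exec_run [ws' [E L]]. by exists (u :: ws').
Qed.

Lemma modified_shift ops :
  flatten (map modified (map shift ops)) = map succn (flatten (map modified ops)).
Proof.
elim: ops => [|o ops IH] //=.
by rewrite IH map_cat; case: o.
Qed.

Lemma plan_ops u v c : Plan u v c -> exists ops,
  [/\ exec u ops = Some v, size ops = c & uniq (flatten (map modified ops))].
Proof.
elim=> {u v c} [|a u v c _ [ops [E S U]]|a b u v c Hab _ [ops [E S U]]
                |a b u v c Hab _ [ops [E S U]]].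
- by exists [::].
- exists (map shift ops); split.
  + by rewrite exec_shift E.
  + by rewrite size_map.
  + by rewrite modified_shift map_inj_uniq //; exact: succn_inj.
- exists (Rep 0 :: map shift ops); split.
  + rewrite /= exec_shift E /=.
    by have -> : b = ~~ a by move: Hab; case: a; case: b.
  + by rewrite /= size_map S.
  + rewrite /= modified_shift map_inj_uniq ?U //; last exact: succn_inj.
    by rewrite andbT; apply/mapP => -[].
- exists (Swp 0 :: map shift (map shift ops)); split.
  + by rewrite /= Hab exec_shift exec_shift E.
  + by rewrite /= !size_map S.
  + rewrite /= !modified_shift map_inj_uniq ?map_inj_uniq ?U //;
      try exact: succn_inj.
    rewrite inE /= andbT; apply/andP; split.
      by apply/mapP => -[].
    by apply/mapP => -[x /mapP [y _ ->]].
Qed.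

Lemma plan_refl v : Plan v v 0.
Proof. elim: v => [|a v IH]; [exact: PNil | exact: PEq]. Qed.

Lemma plan_exists u v : size u = size v -> exists c, Plan u v c.
Proof.
elim: u v => [|a u IH] [|b v] //=; first by exists 0; exact: PNil.
case=> /IH [c P].
case: (eqVneq a b) => [<-|H]; first by exists c; exact: PEq.
by exists c.+1; exact: PRep.
Qed.

Lemma apply_step u o u' : apply_op u o = Some u' -> Step u u'.
Proof.
elim: u o u' => [|a t IH] o u'.
  by case: o => i /=; rewrite ?andFb.
case: o => [[|i]|[|i]].
- by move=> [<-]; apply: SRep; case: a.
- rewrite -[Rep i.+1]/(shift (Rep i)) apply_shift.
  case E: (apply_op t (Rep i)) => [w|] //= [<-]; apply: SCons; exact: IH E.
- case: t IH => [|b t] IH //=.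
  case: ifP => // H [<-] /=. apply: SSwp. by move: H; rewrite ?andTb.
- rewrite -[Swp i.+1]/(shift (Swp i)) apply_shift.
  case E: (apply_op t (Swp i)) => [w|] //= [<-]; apply: SCons; exact: IH E.
Qed.

Lemma rep_case a b t v c : a != b -> Plan (b::t) v c ->
  exists2 c', Plan (a::t) v c' & c' <= c.+1.
Proof.
move=> Hab Hp;
inversion Hp as [|x u1 v1 c1 Hp1|x y u1 v1 c1 Hne Hp1|x y u1 v1 c1 Hne Hp1]; subst.
- by exists c.+1 => //; apply: PRep.
- have E : y = a by clear -Hab Hne; move: Hab Hne; case: a; case: b; case: y.
  subst; exists c1; [exact: PEq|lia].
- have E : y = a by clear -Hab Hne; move: Hab Hne; case: a; case: b; case: y.
  subst; exists c1.+1 => //; apply: PEq; exact: PRep.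
Qed.

Lemma swp_case a b t v c : a != b -> Plan (b::a::t) v c ->
  exists2 c', Plan (a::b::t) v c' & c' <= c.+1.
Proof.
move=> Hab Hp;
inversion Hp as [|x u1 v1 c1 Hp1|x y u1 v1 c1 Hne Hp1|x y u1 v1 c1 Hne Hp1]; subst.
- inversion Hp1 as [|x2 u2 v2 c2 Hp2|x2 y2 u2 v2 c2 Hne2 Hp2|x2 y2 u2 v2 c2 Hne2 Hp2]; subst.
  + by exists c.+1 => //; apply: PSwp.
  + have E : y2 = b by clear -Hab Hne2; move: Hab Hne2; case: a; case: b; case: y2.
    subst; exists c2.+1 => //; apply: PRep => //; exact: PEq.
  + have E : y2 = b by clear -Hab Hne2; move: Hab Hne2; case: a; case: b; case: y2.
    subst; exists c2.+2 => //; apply: PRep => //; apply: PEq; apply: PRep => //.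
    by rewrite eq_sym.
- have E : y = a by clear -Hab Hne; move: Hab Hne; case: a; case: b; case: y.
  subst. have [c' P L] := @rep_case b a t v1 c1 Hne Hp1.
  exists c'; [exact: PEq | lia].
- exists c1; last by apply: leqW.
  by apply: PEq; apply: PEq.
Qed.

Lemma step_plan n : forall u u' v c, size u <= n -> Step u u' -> Plan u' v c ->
  exists2 c', Plan u v c' & c' <= c.+1.
Proof.
elim: n => [|n IH] u u' v c Hs St Hp.
  by case: St Hs Hp.
case: St Hs Hp => [a b t Hab|a b t Hab|a t t' St] Hs Hp.
- exact: rep_case Hab Hp.
- exact: swp_case Hab Hp.
- have Hst : size t <= n by [].
  inversion Hp as [|x u1 v1 c1 Hp1|x y u1 v1 c1 Hne Hp1|x y u1 v1 c1 Hne Hp1]; subst.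
  + have [c' P L] := IH _ _ _ _ Hst St Hp1.
    exists c'; [exact: PEq | lia].
  + have [c' P L] := IH _ _ _ _ Hst St Hp1.
    exists c'.+1; [exact: PRep | lia].
  + inversion St as [x2 y2 s Hne2|x2 y2 s Hne2|x2 s s' St2]; subst.
    * have E : x2 = a by clear -Hne Hne2; move: Hne Hne2; case: a; case: x2; case: y.
      subst; exists c1.+1; [apply: PRep => //; exact: PEq | lia].
    * have E : x2 = a by clear -Hne Hne2; move: Hne Hne2; case: a; case: x2; case: y.
      subst.
      have [c' P L] := @rep_case y a s v1 c1 ltac:(by rewrite eq_sym) Hp1.
      exists c'.+1; [apply: PRep => //; exact: PEq | lia].
    * have Hs2 : size s <= n by move: Hst => /=; lia.
      have [c' P L] := IH _ _ _ _ Hs2 St2 Hp1.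
      exists c'.+1; [exact: PSwp | lia].
Qed.

Lemma exec_plan u v ops : exec u ops = Some v ->
  exists2 c, Plan u v c & c <= size ops.
Proof.
elim: ops u => [|o ops IH] u /=.
  by case=> <-; exists 0 => //; exact: plan_refl.
case E: (apply_op u o) => [u'|] // Ex.
have [c P L] := IH _ Ex.
have [c' P' L'] := step_plan (leqnn _) (apply_step E) P.
exists c' => //; lia.
Qed.

Lemma min_ex (Q : nat -> Prop) n : Q n ->
  exists c, Q c /\ forall d, Q d -> c <= d.
Proof.
elim: n {-2}n (leqnn n) => [|n IH] k Hk Qk.
  exists k; split => // d _; move: Hk; lia.
destruct (classic (exists d, d < k /\ Q d)) as [[d [Hd Qd]]|H].
  by apply: (IH d) => //; move: Hk Hd; lia.
exists k; split => // d Qd.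
rewrite leqNgt; apply/negP => Hd; apply: H; by exists d.
Qed.

Theorem lemma1 (m : nat) (u v : seq bool) :
  1 <= m -> size u = m -> size v = m ->
  exists ops : seq op, minimal_tilde_transformation u v ops.
Proof.
move=> _ Hu Hv.
have [n P] := @plan_exists u v ltac:(by rewrite Hu Hv).
have [c [Pc Hmin]] := min_ex P.
have [ops [E S U]] := plan_ops Pc.
exists ops; split; first exact/tt_exec.
split => //.
split; first by exists ops; split => //; exact/tt_exec.
move=> ops' /tt_exec /exec_plan [d Pd Ld].
rewrite S; exact: leq_trans (Hmin _ Pd) Ld.
Qed.
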